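(* Let $(\bm{W}_0,\bm{D}_0,f_{0,j}:j=1,\ldots,p)$ and $(\bm{W}_1,\bm{D}_0,f_{1,j}:j=1,\ldots,p)$ be two parameter values of the model in the context, sharing the same diagonal matrix $\bm{D}_0$, such that they generate the same distribution of $\bm{Y}_t$. If $\bm{W}_0$ is strictly lower triangular and $\bm{W}_1$ has all diagonal entries zero, then $\bm{W}_0=\bm{W}_1$.
   Context: Model: a $p$-dimensional time series $(\bm{Y}_t)$ satisfies $\bm{Y}_t-\bm{W}\bm{Y}_t=\bm{D}^{1/2}\bm{Z}_t$, where $\bm{W}$ is a $p\times p$ matrix with $\bm{I}-\bm{W}$ invertible, $\bm{D}$ is a diagonal matrix with positive diagonal entries, and $(\bm{Z}_t)$ is a zero-mean stationary Gaussian process whose $p$ components are mutually independent univariate stationary series with unit variance and spectral densities $f_1,\ldots,f_p$. *)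

(* Defs.v *)
From HB Require Import structures.
From mathcomp Require Import all_boot all_order all_algebra.
From mathcomp Require Import all_classical all_reals all_analysis.
Set Implicit Arguments. Unset Strict Implicit. Unset Printing Implicit Defensive.
Import Order.TTheory GRing.Theory Num.Theory.
Import numFieldNormedType.Exports.
Local Open Scope classical_set_scope.
Local Open Scope ring_scope.

Section Model.
Variable R : realType.

Definition freq_dom : set R := `[(- pi)%R, pi]%classic.

(* f is the spectral density of a real, zero-mean, stationary univariate
   series with unit variance: nonnegative, even, Lebesgue integrable on
   [-pi,pi], with total mass 1 (= variance gamma(0)). *)
Definition is_unit_spec_density (f : R -> R) : Prop :=
  [/\ measurable_fun freq_dom f,
      (@lebesgue_measure R).-integrable freq_dom (EFin \o f),
      (forall w, 0 <= f w),
      (forall w, f (- w) = f w) &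
      Rintegral (@lebesgue_measure R) freq_dom f = 1].

(* Autocovariance at lag h of the series with spectral density f:
   gamma(h) = \int_{-pi}^{pi} e^{i h w} f(w) dw = \int_{-pi}^{pi} cos(h w) f(w) dw. *)
Definition acvf (f : R -> R) (h : int) : R :=
  Rintegral (@lebesgue_measure R) freq_dom (fun w => cos (h%:~R * w) * f w).

Variable p : nat.

Definition diag_sqrt (D : 'M[R]_p) : 'M[R]_p :=
  \matrix_(i, j) (if i == j then Num.sqrt (D i i) else 0).

(* Admissible parameter value (W, D, f_1..f_p) of the model
   Y_t - W Y_t = D^{1/2} Z_t. *)
Definition model_param (W D : 'M[R]_p) (f : 'I_p -> R -> R) : Prop :=
  [/\ (1%:M - W) \in unitmx,
      (forall i j : 'I_p, i != j -> D i j = 0),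
      (forall i : 'I_p, 0 < D i i) &
      (forall j : 'I_p, is_unit_spec_density (f j))].

(* Y_t = (I - W)^{-1} D^{1/2} Z_t. *)
Definition mix_mx (W D : 'M[R]_p) : 'M[R]_p := invmx (1%:M - W) *m diag_sqrt D.

(* Autocovariance matrix of Y at lag h: Cov(Y_{t+h}, Y_t) = A diag(gamma_j(h)) A^T,
   using mutual independence of the components of Z. *)
Definition acvfY (W D : 'M[R]_p) (f : 'I_p -> R -> R) (h : int) : 'M[R]_p :=
  mix_mx W D *m diag_mx (\row_j acvf (f j) h) *m (mix_mx W D)^T.

(* Since Y is a zero-mean stationary Gaussian process, its distribution
   (all finite-dimensional laws) is determined by, and determines, its
   autocovariance function. *)
Definition same_distribution (W0 D0 : 'M[R]_p) (f0 : 'I_p -> R -> R)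
    (W1 D1 : 'M[R]_p) (f1 : 'I_p -> R -> R) : Prop :=
  forall h : int, acvfY W0 D0 f0 h = acvfY W1 D1 f1 h.

End Model.

(* Main.v *)
Require Import Defs.
From mathcomp Require Import all_boot all_order all_algebra.
From mathcomp Require Import all_classical all_reals all_analysis.
From mathcomp Require Import zify.
Import Order.TTheory GRing.Theory Num.Theory.
Local Open Scope ring_scope.

Theorem lemma1 (R : realType) (p : nat) (W0 W1 D0 : 'M[R]_p)
    (f0 f1 : 'I_p -> R -> R) :
  model_param W0 D0 f0 ->
  model_param W1 D0 f1 ->
  same_distribution W0 D0 f0 W1 D0 f1 ->
  (forall i j : 'I_p, (i <= j)%N -> W0 i j = 0) ->
  (forall i : 'I_p, W1 i i = 0) ->
  W0 = W1.
Proof.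
rewrite /model_param /same_distribution.
move=> [U0 _ Dpos F0] [U1 _ _ F1] /(_ 0%Z) H0 W0lt W1d.
have acv1 : forall f : R -> R, is_unit_spec_density f -> acvf f 0 = 1.
  move=> f; rewrite /is_unit_spec_density; case=> _ _ _ _ If; rewrite /acvf.
  have -> : (fun w => cos ((0:int)%:~R * w) * f w) = f.
    by apply/funext => w; rewrite mulr0z mul0r cos0 mul1r.
  exact: If.
have diag1 : forall f : 'I_p -> R -> R, (forall j, is_unit_spec_density (f j)) ->
    diag_mx (\row_j acvf (f j) 0) = 1%:M.
  move=> f Hf; rewrite -diag_const_mx; congr diag_mx.
  by apply/matrixP => i j; rewrite !mxE acv1.
rewrite /acvfY !diag1 // !mulmx1 in H0.
set s := fun i : 'I_p => Num.sqrt (D0 i i).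
have spos : forall i, 0 < s i by move=> i; rewrite sqrtr_gt0.
set S := diag_mx (\row_i s i).
set Si := diag_mx (\row_i (s i)^-1).
have eS : diag_sqrt D0 = S.
  by apply/matrixP => i j; rewrite !mxE; case: eqP => [->|]; rewrite ?mulr1n ?mulr0n.
have SSi : S *m Si = 1%:M.
  apply/matrixP => i j; rewrite mul_diag_mx !mxE; case: eqP => [->|]; 
    rewrite ?mulr1n ?mulr0n ?mulr0 ?divff //; exact: lt0r_neq0.
have SiS : Si *m S = 1%:M by apply: mulmx1C.
set B0 := 1%:M - W0. set B1 := 1%:M - W1.
set P := Si *m B1 *m invmx B0 *m S.
have PPt : P *m P^T = 1%:M.
  rewrite /mix_mx eS in H0.
  have -> : P *m P^T = Si *m B1 *m ((invmx B0 *m S) *m (invmx B0 *m S)^T) *m B1^T *m Si^T.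
    by rewrite /P !trmx_mul !mulmxA.
  rewrite H0 !trmx_mul !mulmxA -(mulmxA Si B1) mulmxV // mulmx1.
  rewrite -(mulmxA _ (invmx B1)^T) -trmx_mul mulmxV // trmx1 mulmx1.
  by rewrite SiS mul1mx -trmx_mul SiS trmx1.
have PtP : P^T *m P = 1%:M by apply: mulmx1C.
have key : Si *m B1 = P *m Si *m B0.
  by rewrite /P -!mulmxA (mulmxA S) SSi mul1mx mulVmx // mulmx1.
clearbody P.
have colz : forall k, P k k = 1 -> forall j, j != k -> P j k = 0.
  move=> k Pkk j jk.
  have := congr1 (fun M : 'M[R]_p => M k k) PtP; rewrite /= !mxE eqxx /= (bigD1 k) //= !mxE Pkk mul1r.
  rewrite -[X in _ = X -> _](addr0 1) => /addrI Hs.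
  have H2 : P^T k j * P j k = 0.
    by apply: (psumr_eq0P _ Hs) => // l _; rewrite mxE -expr2 sqr_ge0.
  by move: H2; rewrite mxE -expr2 => /eqP; rewrite sqrf_eq0 => /eqP.
have diagP : forall n (i : 'I_p), (p - i <= n)%N -> P i i = 1.
  elim=> [|n IH] i.
    by rewrite leqn0 subn_eq0 leqNgt ltn_ord.
  move=> Hi.
  have := congr1 (fun M : 'M[R]_p => M i i) key.
  rewrite /Si mul_diag_mx mul_mx_diag !mxE (bigD1 i) //= big1 ?addr0.
    rewrite !mxE eqxx W1d W0lt // subr0 mulr1n mulr1 => /esym.
    rewrite -[X in _ = X]mul1r; rewrite mulr1 => /(mulIf _) -> //.
    by rewrite invr_neq0 // lt0r_neq0.
  move=> k ki; rewrite !mxE.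
  case: (ltngtP k i) => [lt|gt|eq].
  - by rewrite W0lt ?(ltnW lt) // (negbTE ki) subrr mulr0.
  - rewrite (colz k) ?mul0r //; last by rewrite eq_sym.
    apply: IH.
    have := ltn_ord k; have := ltn_ord i; move: Hi gt; clear.
    move: (nat_of_ord i) (nat_of_ord k) => a b Hi gt _ _.
    lia.
  - by move: ki; rewrite (val_inj eq) eqxx.
have P1 : P = 1%:M.
  apply/matrixP => i j; rewrite !mxE.
  case: (eqVneq i j) => [->|ij]; first by rewrite (diagP p) // leq_subr.
  by rewrite (colz j) // (diagP p) // leq_subr.
rewrite P1 mul1mx in key.
have := congr1 (mulmx S) key; rewrite !mulmxA SSi !mul1mx /B0 /B1.
by move=> /addrI /oppr_inj.
Qed.
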